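(* Let $n\ge1$, $T\in M(n;\mathbb{C})$ non-singular with $\mathrm{Im}\,T$ positive definite, and $(r,A,p,q)\in\mathbb{N}\times M(n;\mathbb{Z})\times\mathbb{R}^n\times\mathbb{R}^n$. Then the pair $\mathscr{L}_{(r,A,p,q)}=(L_{(r,A,p)},\mathcal{L}_{(r,A,p,q)})$ is an object of the Fukaya category of $\check{T}^{2n}_{J=T}$ (i.e. $L_{(r,A,p)}$ is a Lagrangian submanifold of $(T^{2n},\omega)$ and the curvature of the connection of $\mathcal{L}_{(r,A,p,q)}$ equals $2\pi\mathbf{i}\,B|_{L_{(r,A,p)}}$) if and only if $AT=(AT)^t$.
   Context: $\check{T}^{2n}_{J=T}$ is the real torus $T^{2n}=\mathbb{R}^{2n}/2\pi\mathbb{Z}^{2n}$ with coordinates $(\check x,\check y)=(x^1,\dots,x^n,y^1,\dots,y^n)$ and complexified symplectic form $\tilde\omega=d\check x^t(-T^{-1})^td\check y$, where $d\check x=(dx^1,\dots,dx^n)^t$, $d\check y=(dy^1,\dots,dy^n)^t$; write $\tilde\omega=d\check x^t\omega\, d\check y+\mathbf{i}\,d\check x^tB\,d\check y$ with $\omega:=\mathrm{Im}(-T^{-1})^t$, $B:=\mathrm{Re}(-T^{-1})^t$ (also viewed as the $2$-forms $d\check x^t\omega d\check y$ and $d\check x^tBd\check y$). An object of the Fukaya category is a pair $(L,\mathcal{L})$ with $L$ a Lagrangian submanifold for $\omega$ and $\mathcal{L}\to L$ a complex line bundle with connection whose curvature is $2\pi\mathbf{i}B|_L$. Here $L_{(r,A,p)}$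 is the image under $\mathbb{R}^{2n}\to T^{2n}$ of $\{(\check x,\check y):\check y=\frac1rA\check x+\frac1rp\}$, and $\mathcal{L}_{(r,A,p,q)}\to L_{(r,A,p)}$ is the trivial line bundle with flat connection $d-\frac{\mathbf{i}}{2\pi}\frac1rq^td\check x$. *)

(* Defs.v *)
From HB Require Import structures.
From mathcomp Require Import all_boot all_order all_algebra.
From mathcomp Require Import all_classical all_reals all_analysis.
From mathcomp Require Import complex.
Set Implicit Arguments. Unset Strict Implicit. Unset Printing Implicit Defensive.
Import Order.TTheory GRing.Theory Num.Theory.
Import numFieldNormedType.Exports.
Local Open Scope ring_scope.

Section Defs.
Variable R : realType.
Variable n : nat.

Definition ebasis (j : 'I_n) : 'cV[R]_n := delta_mx j 0.

Definition re_mx (M : 'M[R[i]]_n) : 'M[R]_n := map_mx (@complex.Re R) M.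
Definition im_mx (M : 'M[R[i]]_n) : 'M[R]_n := map_mx (@complex.Im R) M.

Definition posdef (M : 'M[R]_n) : Prop :=
  forall v : 'cV[R]_n, v != 0 -> 0 < (v^T *m M *m v) 0 0.

Definition omega_mx (T : 'M[R[i]]_n) : 'M[R]_n := im_mx ((- invmx T)^T).
Definition B_mx (T : 'M[R[i]]_n) : 'M[R]_n := re_mx ((- invmx T)^T).

(* The constant 2-form  dx^t M dy  on R^{2n} (coordinates (x,y)), evaluated on
   two tangent vectors X = (X.1, X.2), Y = (Y.1, Y.2):
   sum_{j,k} M_{jk} (dx^j /\ dy^k)(X,Y) = X.1^t M Y.2 - Y.1^t M X.2. *)
Definition twoform (M : 'M[R]_n) (X Y : 'cV[R]_n * 'cV[R]_n) : R :=
  (X.1^T *m M *m Y.2 - Y.1^T *m M *m X.2) 0 0.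

(* A (lifted) n-dimensional submanifold of T^{2n}, given by a parametrization
   phi : R^n -> R^{2n} (coordinates x on the submanifold).  It is Lagrangian for
   the symplectic form dx^t w dy iff phi is an immersion (so the submanifold has
   half dimension n) and the pull-back of the form vanishes identically. *)
Definition is_Lagrangian (w : 'M[R]_n)
  (phi : 'cV[R]_n -> 'cV[R]_n * 'cV[R]_n) : Prop :=
  (forall x v, 'D_v phi x = 0 -> v = 0) /\
  (forall x u v, twoform w ('D_u phi x) ('D_v phi x) = 0).

Definition pullback2 (M : 'M[R]_n) (phi : 'cV[R]_n -> 'cV[R]_n * 'cV[R]_n)
  (x : 'cV[R]_n) (j l : 'I_n) : R :=
  twoform M ('D_(ebasis j) phi x) ('D_(ebasis l) phi x).

(* A connection  d + alpha  on the trivial line bundle over the submanifold, with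
   complex 1-form alpha = sum_l (are l x + i aim l x) dx^l in the coordinates x.
   Its curvature is d alpha, with coefficients
   (d alpha)(d/dx^j, d/dx^l) = d_j alpha_l - d_l alpha_j. *)
Definition curvature (are aim : 'I_n -> 'cV[R]_n -> R)
  (x : 'cV[R]_n) (j l : 'I_n) : R[i] :=
  (('D_(ebasis j) (are l) x - 'D_(ebasis l) (are j) x) +i*
   ('D_(ebasis j) (aim l) x - 'D_(ebasis l) (aim j) x))%C.

Definition Fukaya_object (T : 'M[R[i]]_n)
  (phi : 'cV[R]_n -> 'cV[R]_n * 'cV[R]_n)
  (are aim : 'I_n -> 'cV[R]_n -> R) : Prop :=
  is_Lagrangian (omega_mx T) phi /\
  (forall x j l, curvature are aim x j l =
     ((0 +i* (2 * pi)) * (pullback2 (B_mx T) phi x j l)%:C)%C).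

Definition intmx (A : 'M[int]_n) : 'M[R]_n := map_mx (fun z : int => z%:~R) A.
Definition intmxC (A : 'M[int]_n) : 'M[R[i]]_n := map_mx (fun z : int => z%:~R) A.

(* L_(r,A,p): image in T^{2n} of {(x,y) : y = (1/r) A x + (1/r) p}, parametrized
   (on the universal cover) by x |-> (x, (1/r) A x + (1/r) p). *)
Definition L_param (r : nat) (A : 'M[int]_n) (p : 'cV[R]_n)
  (x : 'cV[R]_n) : 'cV[R]_n * 'cV[R]_n :=
  (x, (r%:R)^-1 *: (intmx A *m x) + (r%:R)^-1 *: p).

(* calL_(r,A,p,q): connection d - (i/(2 pi)) (1/r) q^t dx, i.e. alpha has zero
   real part and imaginary part coefficient -(1/(2 pi r)) q_l. *)
Definition calL_re (r : nat) (q : 'cV[R]_n) (l : 'I_n) (x : 'cV[R]_n) : R := 0.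
Definition calL_im (r : nat) (q : 'cV[R]_n) (l : 'I_n) (x : 'cV[R]_n) : R :=
  - ((2 * pi)^-1 * (r%:R)^-1 * q l 0).

End Defs.

(* Main.v *)
Require Import Defs.
From HB Require Import structures.
From mathcomp Require Import all_boot all_order all_algebra.
From mathcomp Require Import all_classical all_reals all_analysis.
From mathcomp Require Import complex.
Import Order.TTheory GRing.Theory Num.Theory.
Import numFieldNormedType.Exports.
Local Open Scope ring_scope.

Lemma derive_aff (R : realType) (V W : normedModType R) (f : V -> W) a v d :
  (forall h : R, h != 0 -> f (h *: v + a) - f a = h *: d) -> 'D_v f a = d.
Proof.
move=> H; rewrite /derive.
apply: (cvg_lim (@norm_hausdorff _ _)).
apply: cvg_near_cst.
near=> h.
have hn : h != 0 by near: h; exact: nbhs_dnbhs_neq.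
by rewrite /= H // scalerA mulVf // scale1r.
Unshelve. all: by end_near.
Qed.

Lemma D_L (R : realType) n r (A : 'M[int]_n) (p : 'cV[R]_n) x v :
  'D_v (L_param r A p) x = (v, (r%:R)^-1 *: (intmx R A *m v)).
Proof.
apply: derive_aff => h _.
rewrite /L_param.
set c := (r%:R)^-1.
have -> : forall (a b c d : 'cV[R]_n), (a, b) - (c, d) = (a - c, b - d) by [].
have -> : forall (a b : 'cV[R]_n), h *: (a, b) = (h *: a, h *: b) by [].
rewrite addrK mulmxDr !scalerDr -!addrA; congr (_, _).
rewrite [c *: (_ *m x) + c *: p]addrC opprD addNKr subrr addr0.
by rewrite -scalemxAr !scalerA mulrC.
Qed.

Section Aux.
Variable R : realType.
Variable n : nat.

Lemma D_cst' (f : 'cV[R]_n -> R) (k : R) x v :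
  (forall y, f y = k) -> 'D_v f x = 0.
Proof. move=> H; have -> : f = cst k by apply/funext => y; rewrite H. exact: derive_cst. Qed.

Lemma TF (M N : 'M[R]_n) (u v : 'cV[R]_n) (c : R) :
  twoform M (u, c *: (N *m u)) (v, c *: (N *m v)) =
  c * ((u^T *m (M *m N) *m v) 0 0 - (v^T *m (M *m N) *m u) 0 0).
Proof.
rewrite /twoform /= -!scalemxAr -scalerBr !mulmxA.
rewrite [in LHS]mxE [in X in c * X = _]mxE [in X in c * (_ + X) = _]mxE. by [].
Qed.

Lemma basis_entry (N : 'M[R]_n) j l :
  ((ebasis R j)^T *m N *m ebasis R l) 0 0 = N j l.
Proof. by rewrite /ebasis trmx_delta -rowE -colE !mxE. Qed.

Lemma sym_basis (N : 'M[R]_n) :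
  (forall j l, ((ebasis R j)^T *m N *m ebasis R l) 0 0 -
               ((ebasis R l)^T *m N *m ebasis R j) 0 0 = 0) <-> N = N^T.
Proof.
split.
  move=> H; apply/matrixP => j l; rewrite mxE.
  by apply/eqP; rewrite -subr_eq0 -!basis_entry H.
by move=> H j l; rewrite !basis_entry {1}H mxE subrr.
Qed.

Lemma sym_all (N : 'M[R]_n) :
  (forall u v : 'cV[R]_n, (u^T *m N *m v) 0 0 - (v^T *m N *m u) 0 0 = 0)
   <-> N = N^T.
Proof.
split.
  by move=> H; apply/sym_basis => j l; apply: H.
move=> H u v.
have -> : (v^T *m N *m u) 0 0 = ((v^T *m N *m u)^T) 0 0 by rewrite [in RHS]mxE.
by rewrite !trmx_mul trmxK mulmxA -H subrr.
Qed.

Lemma curv_iff (b : R) :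
  ((0 : R[i]) = ((0 +i* (2 * pi)) * b%:C)%C) <-> b = 0.
Proof.
split.
  move/(congr1 (@complex.Im R)) => /=.
  rewrite !mul0r add0r => /esym /eqP; rewrite mulf_eq0 => /orP [|/eqP //].
  by rewrite mulf_eq0 pnatr_eq0 /= (negbTE (lt0r_neq0 (pi_gt0 R))).
by move=> ->; rewrite rmorph0 mulr0.
Qed.

Lemma ReD (a b : R[i]) : complex.Re (a + b) = complex.Re a + complex.Re b.
Proof. by case: a; case: b. Qed.
Lemma ImD (a b : R[i]) : complex.Im (a + b) = complex.Im a + complex.Im b.
Proof. by case: a; case: b. Qed.

Lemma re_mul_real (X : 'M[R[i]]_n) (Y : 'M[R]_n) :
  re_mx (X *m map_mx (real_complex R) Y) = re_mx X *m Y.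
Proof.
apply/matrixP => i j; rewrite !mxE.
apply: (big_ind2 (fun a b => complex.Re a = b)) => //.
  by move=> ? ? ? ? <- <-; rewrite ReD.
move=> k _; rewrite !mxE; case: (X i k) => a b /=.
by rewrite mulr0 subr0.
Qed.

Lemma im_mul_real (X : 'M[R[i]]_n) (Y : 'M[R]_n) :
  im_mx (X *m map_mx (real_complex R) Y) = im_mx X *m Y.
Proof.
apply/matrixP => i j; rewrite !mxE.
apply: (big_ind2 (fun a b => complex.Im a = b)) => //.
  by move=> ? ? ? ? <- <-; rewrite ImD.
move=> k _; rewrite !mxE; case: (X i k) => a b /=.
by rewrite mulr0 add0r.
Qed.

Lemma intmxCE (A : 'M[int]_n) :
  intmxC R A = map_mx (real_complex R) (intmx R A).
Proof. by apply/matrixP => i j; rewrite !mxE rmorph_int. Qed.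

Lemma sym_cplx (X : 'M[R[i]]_n) :
  (im_mx X = (im_mx X)^T /\ re_mx X = (re_mx X)^T) <-> X = X^T.
Proof.
split.
  move=> [/matrixP Hi /matrixP Hr]; apply/matrixP => j l.
  move: (Hi j l) (Hr j l); rewrite !mxE.
  by case: (X j l) => a b; case: (X l j) => a' b' /= -> ->.
move=> H; split; apply/matrixP => j l; by rewrite !mxE {1}H mxE.
Qed.

Lemma sym_T (T Ac : 'M[R[i]]_n) : T \in unitmx ->
  ((- invmx T)^T *m Ac = ((- invmx T)^T *m Ac)^T) <-> Ac *m T = (Ac *m T)^T.
Proof.
move=> Tu.
have TtTi : T^T *m (invmx T)^T = 1%:M by rewrite -trmx_mul mulVmx // trmx1.
have TiTt : (invmx T)^T *m T^T = 1%:M by rewrite -trmx_mul mulmxV // trmx1.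
rewrite linearN /= !mulNmx linearN /= !trmx_mul trmxK.
split.
  move=> /oppr_inj H.
  have E1 : T^T *m ((invmx T)^T *m Ac) *m T = Ac *m T by rewrite mulmxA TtTi mul1mx.
  have E2 : T^T *m (Ac^T *m invmx T) *m T = T^T *m Ac^T.
    by rewrite -!mulmxA mulVmx // mulmx1.
  by rewrite -E1 H E2.
move=> H; congr (- _).
have E1 : (invmx T)^T *m (Ac *m T) *m invmx T = (invmx T)^T *m Ac.
  by rewrite -!mulmxA mulmxV // mulmx1.
have E2 : (invmx T)^T *m (T^T *m Ac^T) *m invmx T = Ac^T *m invmx T.
  by rewrite !mulmxA TiTt mul1mx.
by rewrite -E1 H E2.
Qed.

End Aux.

Theorem proposition4p2 (R : realType) (n : nat) (T : 'M[R[i]]_n)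
  (r : nat) (A : 'M[int]_n) (p q : 'cV[R]_n) :
  (1 <= n)%N -> T \in unitmx -> posdef (im_mx T) -> (0 < r)%N ->
  (Fukaya_object T (L_param r A p) (calL_re r q) (calL_im r q) <->
   intmxC R A *m T = (intmxC R A *m T)^T).
Proof.
move=> _ Tu _ r0.
have c0 : (r%:R : R)^-1 != 0 by rewrite invr_eq0 pnatr_eq0 -lt0n.
have curv0 : forall x j l,
    curvature (calL_re r q) (calL_im r q) x j l = 0.
  move=> x j l; rewrite /curvature.
  rewrite (@D_cst' R n _ 0) // (@D_cst' R n (calL_re r q j) 0) //.
  rewrite (@D_cst' R n (calL_im r q l) (- ((2 * pi)^-1 * (r%:R)^-1 * q l 0))) //.
  rewrite (@D_cst' R n (calL_im r q j) (- ((2 * pi)^-1 * (r%:R)^-1 * q j 0))) //.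
  by rewrite subrr.
rewrite -sym_T // -sym_cplx intmxCE im_mul_real re_mul_real.
rewrite -/(omega_mx T) -/(B_mx T).
rewrite /Fukaya_object /is_Lagrangian /pullback2.
split.
- move=> [[_ HL] HC]; split.
  + apply/sym_all => u v; have := HL 0 u v; rewrite !D_L TF => /eqP.
    by rewrite mulf_eq0 (negbTE c0) /= => /eqP.
  + apply/sym_basis => j l; have := HC 0 j l; rewrite curv0 !D_L TF.
    by move/curv_iff/eqP; rewrite mulf_eq0 (negbTE c0) /= => /eqP.
- move=> [H1 H2]; split; [split|].
  + by move=> x v; rewrite D_L => /(congr1 fst).
  + by move=> x u v; rewrite !D_L TF (proj2 (@sym_all R n _) H1 u v) mulr0.
  + move=> x j l; rewrite curv0 !D_L TF (proj2 (@sym_basis R n _) H2 j l) mulr0.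
    exact/curv_iff.
Qed.
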